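(* Let $m\ge2$ and let $V\subseteq k[\beta]$ be a $k$-subspace with $(\beta^m)\subseteq V$. Let $(p_i)_{i\ge1}$ be a $k$-basis of $V$ whose orders $\nu_i=\mathrm{ord}\,p_i$ satisfy $0\le\nu_1<\nu_2<\cdots$. Then $$\dim_k\mathcal D'_m(V)\ge 2m-\max(1,\nu_1,m-\nu_2+1)-\max(1,m-\nu_1).$$ In particular, $\mathcal D'_m(V)=0$ implies $\nu_1=0$ and $\nu_2=1$.
   Context: $k$ is a field; the order $\mathrm{ord}\,p$ of a nonzero polynomial $p\in k[\beta]$ is the smallest exponent of $\beta$ with nonzero coefficient. A first order differential operator $A+B\frac{d}{d\beta}$ ($A,B\in k[\beta]$) acts by $v\mapsto Av+Bv'$. $\mathcal D'_m(V)$ is the quotient of the Lie algebra $\{\Theta=A+B\frac{d}{d\beta}: A,B\in k[\beta],\ B(0)=0,\ \Theta(V)\subseteq V\}$ by $\{A+B\frac{d}{d\beta}: A\in k+(\beta^m),\ B\in(\beta^m)\}$. (For $\Lambda=kQ/I(n;n',n'';V)$ with $m=\min(n',n'')$, this is the Lie algebra $\mathcal D'(\Lambda)$, and $\dim\mathrm{HH}^1(\Lambda)=\dim\mathcal D'(\Lambda)+n-m+c$.) *)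

(* Defs.v *)
From HB Require Import structures.
From mathcomp Require Import all_boot all_order all_algebra.
Set Implicit Arguments. Unset Strict Implicit. Unset Printing Implicit Defensive.
Import GRing.Theory.
Local Open Scope ring_scope.

Section Defs.
Variable k : fieldType.

(* ord p : smallest exponent of beta with nonzero coefficient (0 for p = 0). *)
Definition pord (p : {poly k}) : nat := find (fun c => c != 0) (polyseq p).

Definition is_subspace (V : {poly k} -> Prop) : Prop :=
  V 0 /\ forall (a : k) (u v : {poly k}), V u -> V v -> V (a *: u + v).

(* (p_i)_{i>=0} (paper: i >= 1, shifted by one) is a k-basis of V. *)
Definition is_basis_seq (V : {poly k} -> Prop) (p : nat -> {poly k}) : Prop :=
  (forall i, V (p i)) /\
  (forall (n : nat) (c : 'I_n -> k),
      \sum_(i < n) c i *: p i = 0 -> forall i, c i = 0) /\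
  (forall v, V v -> exists (n : nat) (c : 'I_n -> k), v = \sum_(i < n) c i *: p i).

(* The Lie algebra { A + B d/dbeta : B(0) = 0, Theta(V) <= V },
   an operator being identified with its pair of coefficients (A, B). *)
Definition inD (V : {poly k} -> Prop) (Th : {poly k} * {poly k}) : Prop :=
  Th.2.[0] = 0 /\ forall v, V v -> V (Th.1 * v + Th.2 * v^`()).

Definition inN (m : nat) (Th : {poly k} * {poly k}) : Prop :=
  (exists (c : k) (q : {poly k}), Th.1 = c%:P + 'X^m * q) /\
  (exists q : {poly k}, Th.2 = 'X^m * q).

(* dim_k D'_m(V) >= d : there are d elements of the Lie algebra that are
   linearly independent modulo the ideal. *)
Definition dimDm_ge (V : {poly k} -> Prop) (m d : nat) : Prop :=
  exists F : 'I_d -> {poly k} * {poly k},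
    (forall i, inD V (F i)) /\
    forall c : 'I_d -> k,
      inN m (\sum_(i < d) c i *: (F i).1, \sum_(i < d) c i *: (F i).2) ->
      forall i, c i = 0.

Definition Dm_zero (V : {poly k} -> Prop) (m : nat) : Prop :=
  forall Th, inD V Th -> inN m Th.

End Defs.

(* Main.v *)
Require Import Defs.
From HB Require Import structures.
From mathcomp Require Import all_boot all_order all_algebra.
From mathcomp Require Import zify ring.
Import GRing.Theory.
Set Implicit Arguments. Unset Strict Implicit.
Local Open Scope ring_scope.

Definition low (k : fieldType) (q : {poly k}) (n : nat) : Prop :=
  forall l, (l < n)%N -> q`_l = 0.

Lemma low_mono (k : fieldType) (q : {poly k}) a b : (b <= a)%N -> low q a -> low q b.
Proof. move=> hb h l hl; apply: h; exact: leq_trans hl hb. Qed.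

Lemma low0 (k : fieldType) n : low (0 : {poly k}) n.
Proof. by move=> l _; rewrite coef0. Qed.

Lemma lowD (k : fieldType) (q r : {poly k}) n : low q n -> low r n -> low (q + r) n.
Proof. by move=> h1 h2 l hl; rewrite coefD h1 // h2 // addr0. Qed.

Lemma lowN (k : fieldType) (q : {poly k}) n : low q n -> low (- q) n.
Proof. by move=> h1 l hl; rewrite coefN h1 // oppr0. Qed.

Lemma lowZ (k : fieldType) (c : k) (q : {poly k}) n : low q n -> low (c *: q) n.
Proof. by move=> h1 l hl; rewrite coefZ h1 // mulr0. Qed.

Lemma lowM (k : fieldType) (q r : {poly k}) a b : low q a -> low r b -> low (q * r) (a + b).
Proof.
move=> h1 h2 l hl; rewrite coefM big1 // => j _.
have [hj|hj] := ltnP j a; first by rewrite h1 // mul0r.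
rewrite h2 ?mulr0 //.
have := ltn_ord j; lia.
Qed.

Lemma lowXn (k : fieldType) (q : {poly k}) s a : low q a -> low ('X^s * q) (s + a).
Proof.
move=> h l hl; rewrite coefXnM; case: ifP => // /negbT; rewrite -leqNgt => hs.
apply: h; lia.
Qed.

Lemma lowXn0 (k : fieldType) s : low ('X^s : {poly k}) s.
Proof. by move=> l hl; rewrite coefXn (ltn_eqF hl). Qed.

Lemma lowderiv (k : fieldType) (q : {poly k}) a : low q a -> low q^`() a.-1.
Proof. move=> h l hl; rewrite coef_deriv h ?mul0rn //; lia. Qed.

Lemma low_mulX (k : fieldType) (V : {poly k} -> Prop) m (q : {poly k}) :
  (forall r : {poly k}, V ('X^m * r)) -> low q m -> V q.
Proof.
move=> hV h.
have -> : q = 'X^m * drop_poly m q.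
  rewrite -{1}(poly_take_drop m q) mulrC.
  suff -> : take_poly m q = 0 by rewrite add0r.
  by apply/polyP => i; rewrite coef_take_poly coef0; case: ifP => // /h.
exact: hV.
Qed.

Lemma low_pord (k : fieldType) (q : {poly k}) : low q (pord q).
Proof.
move=> l hl; have := before_find 0 hl.
by move/negbFE/eqP.
Qed.

Lemma pord_lead (k : fieldType) (q : {poly k}) : q != 0 -> q`_(pord q) != 0.
Proof.
move=> hq; have := @nth_find _ 0 (fun c : k => c != 0) q; apply.
apply/hasP; exists (lead_coef q); last by rewrite lead_coef_eq0.
rewrite lead_coefE; apply: mem_nth; rewrite prednK ?leqnn // lt0n size_poly_eq0 //.
Qed.
Lemma span_ind (k : fieldType) (V : {poly k} -> Prop) (p : nat -> {poly k})
  (P : {poly k} -> Prop) :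
  is_basis_seq V p -> P 0 -> (forall u w, P u -> P w -> P (u + w)) ->
  (forall c i, P (c *: p i)) -> forall v, V v -> P v.
Proof.
move=> [_ [_ hsp]] h0 hD hZ v /hsp [n [c ->]].
by apply: big_ind => // i _; apply: hZ.
Qed.

Lemma p0_nz (k : fieldType) (V : {poly k} -> Prop) (p : nat -> {poly k}) :
  is_basis_seq V p -> p 0%N != 0.
Proof.
move=> [_ [hi _]]; apply/eqP => h.
have := hi 1%N (fun _ => 1) _ ord0; rewrite big_ord1 h scaler0 => /(_ erefl) /eqP.
by rewrite oner_eq0.
Qed.

Lemma ord_ge0 (k : fieldType) (p : nat -> {poly k}) :
  (forall i, pord (p i) < pord (p i.+1))%N -> forall i, (pord (p 0%N) <= pord (p i))%N.
Proof.
move=> h; elim=> // i ih; exact: leq_trans ih (ltnW (h i)).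
Qed.

Lemma ord_ge1 (k : fieldType) (p : nat -> {poly k}) :
  (forall i, pord (p i) < pord (p i.+1))%N -> forall i, (1 <= i)%N -> (pord (p 1%N) <= pord (p i))%N.
Proof.
move=> h; elim=> // i ih hi; case: i ih hi => // i ih _.
exact: leq_trans (ih erefl) (ltnW (h i.+1)).
Qed.

Lemma V_low (k : fieldType) (V : {poly k} -> Prop) (p : nat -> {poly k}) :
  is_basis_seq V p -> (forall i, pord (p i) < pord (p i.+1))%N ->
  forall v, V v -> low v (pord (p 0%N)).
Proof.
move=> hb hinc; apply: (span_ind hb); first exact: low0.
  by move=> u w; apply: lowD.
move=> c i; apply: lowZ; apply: (low_mono (ord_ge0 hinc i)); exact: low_pord.
Qed.

Lemma V_W (k : fieldType) (V : {poly k} -> Prop) (p : nat -> {poly k}) :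
  is_basis_seq V p -> (forall i, pord (p i) < pord (p i.+1))%N ->
  forall v, V v -> low (p 0%N * v^`() - (p 0%N)^`() * v)
                      (pord (p 0%N) + pord (p 1%N) - 1).
Proof.
move=> hb hinc; apply: (span_ind hb).
- by rewrite deriv0 mulr0 mulr0 subr0; exact: low0.
- move=> u w hu hw; rewrite derivD.
  have -> : p 0%N * (u^`() + w^`()) - (p 0%N)^`() * (u + w) =
    (p 0%N * u^`() - (p 0%N)^`() * u) + (p 0%N * w^`() - (p 0%N)^`() * w) by ring.
  exact: lowD.
- move=> c i; rewrite derivZ.
  have -> : p 0%N * (c *: (p i)^`()) - (p 0%N)^`() * (c *: p i) =
    c *: (p 0%N * (p i)^`() - (p 0%N)^`() * p i) by rewrite -!scalerAr scalerBr.
  apply: lowZ; case: i => [|i].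
    by rewrite mulrC subrr; exact: low0.
  have h1 := ord_ge1 hinc (i := i.+1) erefl.
  have h0 := ord_ge0 hinc 0.
  have h01 := hinc 0%N.
  apply: lowD; last apply: lowN.
    have := lowM (low_pord (q:=p 0%N)) (lowderiv (low_pord (q:=p i.+1))).
    apply: low_mono; lia.
  have := lowM (lowderiv (low_pord (q:=p 0%N))) (low_pord (q:=p i.+1)).
  apply: low_mono; lia.
Qed.
Lemma tri (k : fieldType) n (c : 'I_n -> k) (g : 'I_n -> {poly k}) (S : pred 'I_n)
  (pos : 'I_n -> nat) :
 (forall i, ~~ S i -> c i *: g i = 0) ->
 (forall i j, S i -> S j -> (i < j)%N -> (pos i < pos j)%N) ->
 (forall i, S i -> low (g i) (pos i)) ->
 (forall i, S i -> (g i)`_(pos i) != 0) ->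
 (forall i, S i -> (\sum_(j < n) c j *: g j)`_(pos i) = 0) ->
 forall i, S i -> c i = 0.
Proof.
move=> hnS hinc hlow hlead hsum.
suff H : forall N (i : 'I_n), (i < N)%N -> S i -> c i = 0.
  by move=> i; apply: (H i.+1).
elim=> [//|N IH] i hi hS.
have := hsum i hS; rewrite coef_sum (bigD1 i) //= big1 => [|j hji].
  rewrite addr0 coefZ => /eqP; rewrite mulf_eq0 (negbTE (hlead i hS)) orbF.
  by move/eqP.
case hSj: (S j); last by rewrite hnS ?hSj // coef0.
case: (ltngtP j i) => hj.
- by rewrite coefZ (IH j) ?mul0r //; lia.
- by rewrite coefZ hlow ?mulr0 // hinc.
- by move: hji; rewrite (val_inj hj) eqxx.
Qed.
Lemma construct (k : fieldType) (m : nat) (V : {poly k} -> Prop)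
  (p : nat -> {poly k}) :
  (2 <= m)%N ->
  (forall q : {poly k}, V ('X^m * q)) ->
  is_basis_seq V p ->
  (forall i, pord (p i) < pord (p i.+1))%N ->
  forall d, (d <= (m - maxn 1 (maxn (pord (p 0%N)) (m + 1 - pord (p 1%N))))
              + (m - maxn 1 (m - pord (p 0%N))))%N ->
  dimDm_ge V m d.
Proof.
move=> hm hX hb hinc d.
set n1 := pord (p 0%N); set n2 := pord (p 1%N).
set X := maxn 1 (maxn n1 (m + 1 - n2)); set Y := maxn 1 (m - n1).
set b := (m - X)%N => hd.
have h01 : (n1 < n2)%N by apply: hinc.
pose G (n : nat) : {poly k} * {poly k} :=
  if (n < b)%N then (- ('X^(X + n - n1) * (p 0%N)^`()), 'X^(X + n - n1) * p 0%N)
  else ('X^(Y + (n - b)), 0).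
exists (fun i : 'I_d => G i); split.
  move=> i; rewrite /G; case: ifP => hi.
    split => /=.
      rewrite horner_coef0; apply: (lowXn (s:=X + i - n1) (low_pord (q:=p 0%N))).
      rewrite -/n1; lia.
    move=> v hv; apply: (low_mulX hX).
    have -> : - ('X^(X + i - n1) * (p 0%N)^`()) * v + 'X^(X + i - n1) * p 0%N * v^`()
      = 'X^(X + i - n1) * (p 0%N * v^`() - (p 0%N)^`() * v) by ring.
    have := lowXn (s:=X + i - n1) (V_W hb hinc hv); apply: low_mono.
    rewrite -/n1 -/n2; lia.
  split => /=; first by rewrite horner0.
  move=> v hv; rewrite mul0r addr0; apply: (low_mulX hX).
  have := lowM ((@lowXn0 k (Y + (i - b)))) (V_low hb hinc hv); apply: low_mono.
  rewrite -/n1; lia.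
move=> c [[c0 [q hA]] [q' hB]]; rewrite /= in hA hB.
have hnz := p0_nz hb.
have hBz : forall i : 'I_d, (i < b)%N -> c i = 0.
  apply: (tri (g := fun i => (G i).2) (S := fun i : 'I_d => (i < b)%N)
              (pos := fun i : 'I_d => (X + i)%N)).
  - by move=> i /=; rewrite /G => /negbTE ->; rewrite scaler0.
  - move=> i j /= _ _; lia.
  - move=> i /= hi; rewrite /G hi /=.
    have := lowXn (s:=X + i - n1) (low_pord (q:=p 0%N)); apply: low_mono.
    rewrite -/n1; lia.
  - move=> i /= hi; rewrite /G hi /= coefXnM.
    have -> : (X + i < X + i - n1)%N = false by lia.
    have -> : (X + i - (X + i - n1))%N = n1 by lia.
    exact: pord_lead.
  - move=> i /= hi; rewrite hB coefXnM; case: ifP => // /negbT; lia.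
have hAz : forall i : 'I_d, (b <= i)%N -> c i = 0.
  apply: (tri (g := fun i => (G i).1) (S := fun i : 'I_d => (b <= i)%N)
              (pos := fun i : 'I_d => (Y + (i - b))%N)).
  - move=> i /=; rewrite -ltnNge => hi; rewrite hBz // scale0r //.
  - move=> i j /= hi hj hij; lia.
  - move=> i /= hi; rewrite /G ltnNge hi /=; exact: lowXn0.
  - move=> i /= hi; rewrite /G ltnNge hi /= coefXn eqxx; exact: oner_neq0.
  - move=> i /= hi; rewrite hA coefD coefC coefXnM.
    have -> : (Y + (i - b) == 0)%N = false by lia.
    have -> : (Y + (i - b) < m)%N = true by have := ltn_ord i; lia.
    by rewrite addr0.
move=> i; case: (ltnP i b) => hi; [exact: hBz | exact: hAz].
Qed.
Lemma zero_dim (k : fieldType) (V : {poly k} -> Prop) m d :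
  Dm_zero V m -> dimDm_ge V m d -> d = 0%N.
Proof.
move=> hz [F [hF hi]]; case: d F hF hi => // d F hF hi; exfalso.
pose c (j : 'I_d.+1) : k := if j == ord0 then 1 else 0.
have hs : forall f : 'I_d.+1 -> {poly k}, \sum_(j < d.+1) c j *: f j = f ord0.
  move=> f; rewrite (bigD1 ord0) //= big1 => [|j /negbTE hj]; last by rewrite /c hj scale0r.
  by rewrite addr0 /c eqxx scale1r.
have := hi c; rewrite !hs -surjective_pairing => /(_ (hz _ (hF ord0)) ord0).
by rewrite /c eqxx => /eqP; rewrite oner_eq0.
Qed.

Theorem mainTheorem16 (k : fieldType) (m : nat) (V : {poly k} -> Prop)
  (p : nat -> {poly k}) :
  (2 <= m)%N ->
  is_subspace V ->
  (forall q : {poly k}, V ('X^m * q)) ->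
  is_basis_seq V p ->
  (forall i, pord (p i) < pord (p i.+1))%N ->
  dimDm_ge V m
    (2 * m - maxn 1 (maxn (pord (p 0%N)) (m + 1 - pord (p 1%N)))
           - maxn 1 (m - pord (p 0%N)))%N
  /\ (Dm_zero V m -> pord (p 0%N) = 0%N /\ pord (p 1%N) = 1%N).
Proof.
move=> hm _ hX hb hinc.
have h01 := hinc 0%N.
split; first by apply: (construct hm hX hb hinc); lia.
move=> hz; have := zero_dim hz (construct hm hX hb hinc (leqnn _)).
move: h01; set n1 := pord (p 0%N); set n2 := pord (p 1%N); lia.
Qed.
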